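(* For every ${\bf L}\in\mathbb{S}^d_{++}$, $$\lambda_{\max}\big({\bf L}^{1/2}\,\mathrm{diag}({\bf L}^{-1})\,{\bf L}^{1/2}\big)\cdot\det({\bf L})^{1/d}\ge\det(\mathrm{diag}({\bf L}))^{1/d}.$$
   Context: $\mathrm{diag}({\bf A})$ denotes the diagonal matrix having the same diagonal as ${\bf A}$; $\mathbb{S}^d_{++}$ is the set of symmetric positive definite $d\times d$ matrices; $\lambda_{\max}$ the largest eigenvalue. *)

(* Defs.v *)
From HB Require Import structures.
From mathcomp Require Import all_boot all_order all_algebra.
From mathcomp Require Import all_classical all_reals all_analysis.
Set Implicit Arguments. Unset Strict Implicit. Unset Printing Implicit Defensive.
Import Order.TTheory GRing.Theory Num.Theory.
Local Open Scope ring_scope.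

Definition mdiag (R : pzRingType) (d : nat) (A : 'M[R]_d) : 'M[R]_d :=
  diag_mx (\row_i A i i).

Definition spd (R : realType) (d : nat) (A : 'M[R]_d) : Prop :=
  A^T = A /\ forall v : 'rV[R]_d, v != 0 -> 0 < (v *m A *m v^T) 0 0.

Definition spsd (R : realType) (d : nat) (A : 'M[R]_d) : Prop :=
  A^T = A /\ forall v : 'rV[R]_d, 0 <= (v *m A *m v^T) 0 0.

Definition is_sqrtm (R : realType) (d : nat) (A S : 'M[R]_d) : Prop :=
  spsd S /\ S *m S = A.

Definition is_lambda_max (R : realType) (d : nat) (M : 'M[R]_d) (l : R) : Prop :=
  eigenvalue M l /\ forall a : R, eigenvalue M a -> a <= l.

(* Main.v *)
Require Import Defs.
From HB Require Import structures.
From mathcomp Require Import all_boot all_order all_algebra.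
From mathcomp Require Import all_classical all_reals all_analysis.
From mathcomp Require Import ring lra.
Import Order.TTheory GRing.Theory Num.Theory.
Set Implicit Arguments. Unset Strict Implicit. Unset Printing Implicit Defensive.
Local Open Scope ring_scope.

Definition qf (R : realType) n (A : 'M[R]_n) (v : 'rV[R]_n) : R := (v *m A *m v^T) 0 0.
Definition nrm (R : realType) n (v : 'rV[R]_n) : R := (v *m v^T) 0 0.

Lemma qfE (R : realType) n (A : 'M[R]_n) v :
  qf A v = \sum_i \sum_j v 0 i * A i j * v 0 j.
Proof.
rewrite /qf !mxE.
under eq_bigr do rewrite !mxE big_distrl /=.
rewrite exchange_big /=; apply: eq_bigr => i _; apply: eq_bigr => j _.
by [].
Qed.

Lemma nrmE (R : realType) n (v : 'rV[R]_n) : nrm v = \sum_i v 0 i ^+ 2.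
Proof. by rewrite /nrm !mxE; apply: eq_bigr => i _; rewrite !mxE expr2. Qed.

Lemma nrm_ge0 (R : realType) n (v : 'rV[R]_n) : 0 <= nrm v.
Proof. by rewrite nrmE sumr_ge0 // => i _; rewrite sqr_ge0. Qed.

Lemma nrm_gt0 (R : realType) n (v : 'rV[R]_n) : v != 0 -> 0 < nrm v.
Proof.
move=> hv; rewrite lt_def nrm_ge0 andbT; apply/eqP => h.
move: hv; rewrite nrmE in h.
case/negP; apply/eqP/matrixP => i j; rewrite ord1 mxE.
have := psumr_eq0P (fun i _ => sqr_ge0 (v 0 i)) h (i:=j) isT.
by move/eqP; rewrite sqrf_eq0 => /eqP.
Qed.

Lemma coord_le (R : realType) n (v : 'rV[R]_n) k : v 0 k ^+ 2 <= nrm v.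
Proof.
rewrite nrmE (bigD1 k) //= lerDl sumr_ge0 // => i _; exact: sqr_ge0.
Qed.

Lemma prod_le (R : realType) n (v : 'rV[R]_n) i j : `|v 0 i * v 0 j| <= 2 * nrm v.
Proof.
have h1 := coord_le v i; have h2 := coord_le v j.
rewrite normrM.
have : `|v 0 i| * `|v 0 j| <= v 0 i ^+ 2 + v 0 j ^+ 2.
  rewrite -[v 0 i ^+ 2](real_normK (num_real _)) -[v 0 j ^+ 2](real_normK (num_real _)).
  have := sqr_ge0 (`|v 0 i| - `|v 0 j|); rewrite sqrrB.
  have := normr_ge0 (v 0 i); have := normr_ge0 (v 0 j). nra.
lra.
Qed.

Definition mxabs (R : realType) n (A : 'M[R]_n) : R := \sum_i \sum_j `|A i j|.

Lemma qf_bound (R : realType) n (A : 'M[R]_n) v : `|qf A v| <= 2 * mxabs A * nrm v.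
Proof.
rewrite qfE /mxabs; apply: le_trans (ler_norm_sum _ _ _) _.
rewrite (mulrC 2) -mulrA (mulrC _ (2 * nrm v)) big_distrr /=.
apply: ler_sum => i _.
apply: le_trans (ler_norm_sum _ _ _) _.
rewrite big_distrr /=; apply: ler_sum => j _.
rewrite mulrAC normrM mulrC [_ * `|A i j|]mulrC; apply: ler_wpM2l; [exact: normr_ge0 | exact: prod_le].
Qed.

Lemma qf_lin (R : realType) n (P : 'M[R]_n) x y s : P^T = P ->
  qf P (x - s *: y) = qf P x - 2 * s * (y *m P *m x^T) 0 0 + s ^+ 2 * qf P y.
Proof.
move=> hP; rewrite /qf.
have -> : (x - s *: y)^T = x^T - s *: y^T by apply/matrixP => i j; rewrite !mxE.
have hs : x *m P *m y^T = y *m P *m x^T.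
  apply/matrixP => i j; rewrite !ord1.
  transitivity ((x *m P *m y^T)^T 0 0); first by rewrite [RHS]mxE.
  by rewrite !trmx_mul trmxK hP mulmxA.
rewrite !mulmxBl !mulmxBr -!scalemxAl -!scalemxAr hs.
set a := x *m P *m x^T; set b := y *m P *m x^T; set c := y *m P *m y^T.
rewrite !mxE expr2; lra.
Qed.

Lemma qf0 (R : realType) n (M : 'M[R]_n) : qf M 0 = 0.
Proof. by rewrite /qf !mul0mx mxE. Qed.
Lemma nrm0 (R : realType) n : nrm (0 : 'rV[R]_n) = 0.
Proof. by rewrite /nrm !mul0mx mxE. Qed.

Lemma qf_shift (R : realType) n (M : 'M[R]_n) t w :
  qf (- (M - t%:M)) w = t * nrm w - qf M w.
Proof.
rewrite /qf /nrm mulmxN mulmxBr mul_mx_scalar mulNmx mulmxBl -scalemxAl.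
set a := w *m M *m w^T; set b := w *m w^T.
by rewrite !mxE; ring.
Qed.

Lemma mxabs_ge0 (R : realType) n (M : 'M[R]_n) : 0 <= mxabs M.
Proof. by rewrite /mxabs sumr_ge0 // => i _; rewrite sumr_ge0. Qed.

Lemma rayleigh (R : realType) n (M : 'M[R]_n) l : M^T = M ->
  (forall a, eigenvalue M a -> a <= l) -> forall v, qf M v <= l * nrm v.
Proof.
move=> hM hl v.
have [->|hv] := eqVneq v 0; first by rewrite qf0 nrm0 mulr0.
pose E := [set r : R | exists2 w : 'rV_n, w != 0 & r = qf M w / nrm w]%classic.
have E0 : (E !=set0)%classic by exists (qf M v / nrm v); exists v.
have Eub : ubound E (2 * mxabs M).
  move=> r [w hw ->]; rewrite ler_pdivrMr ?nrm_gt0 //.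
  exact: le_trans (ler_norm _) (qf_bound _ _).
have hsup : has_sup E by split => //; exists (2 * mxabs M).
pose t := sup E.
have key : forall w, qf M w <= t * nrm w.
  move=> w; have [->|hw] := eqVneq w 0; first by rewrite qf0 nrm0 mulr0.
  have : qf M w / nrm w <= t by apply: sup_upper_bound => //; exists w.
  by rewrite ler_pdivrMr ?nrm_gt0.
have teig : eigenvalue M t.
  have [//|hne] := boolP (eigenvalue M t); exfalso.
  have hu : (M - t%:M) \in unitmx.
    rewrite -row_free_unit -kermx_eq0.
    by move: hne; rewrite /eigenvalue /eigenspace negbK.
  pose P := - (M - t%:M).
  have hMij : forall i j, M j i = M i j by move=> i j; rewrite -[in RHS]hM mxE.
  have hP' : (M - t%:M)^T = M - t%:M.
    by apply/matrixP => i j; rewrite !mxE hMij eq_sym.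
  have hP : P^T = P by rewrite /P linearN /= hP'.
  have psd : forall w, 0 <= qf P w.
    by move=> w; rewrite /P qf_shift subr_ge0 key.
  pose Q := - invmx (M - t%:M).
  have hQ : Q^T = Q by rewrite /Q linearN /= trmx_inv hP'.
  have hPQ : Q *m P = 1%:M by rewrite /Q /P mulmxN mulNmx opprK mulVmx.
  pose C := 2 * mxabs Q + 1.
  have C0 : 0 < C by rewrite /C ltr_wpDl // mulr_ge0 // mxabs_ge0.
  have bound : forall w, w != 0 -> C^-1 * nrm w <= qf P w.
    move=> w hw; pose u := w *m Q.
    have h1 : u *m P = w by rewrite /u -mulmxA hPQ mulmx1.
    have hb : (u *m P *m w^T) 0 0 = nrm w by rewrite h1.
    have hc : qf P u <= C * nrm w.
      rewrite /qf h1 /u trmx_mul hQ mulmxA.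
      apply: le_trans (ler_norm _) _; apply: le_trans (qf_bound Q w) _.
      by rewrite ler_wpM2r ?nrm_ge0 // /C lerDl.
    have := psd (w - C^-1 *: u); rewrite qf_lin // hb => h.
    have hs : C^-1 ^+ 2 * qf P u <= C^-1 * nrm w.
      rewrite expr2 -mulrA; apply: ler_wpM2l; first by rewrite invr_ge0 ltW.
      by rewrite ler_pdivrMl.
    lra.
  have ub2 : ubound E (t - C^-1).
    move=> r [w hw ->]; rewrite ler_pdivrMr ?nrm_gt0 //.
    have := bound w hw; rewrite /P qf_shift => h.
    rewrite mulrBl; lra.
  have := ge_sup E0 ub2.
  have : 0 < C^-1 by rewrite invr_gt0.
  rewrite -/t; lra.
apply: le_trans (key v) _.
by rewrite ler_wpM2r ?nrm_ge0 // hl.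
Qed.

Lemma hadamard (R : realType) n (A : 'M[R]_n) : A^T = A ->
  (forall v, v != 0 -> 0 < qf A v) -> 0 < \det A /\ \det A <= \prod_i A i i.
Proof.
elim: n A => [|n IH] A hA hpd.
  by rewrite det_mx00 big_ord0 ltr01 lexx.
move: A hA hpd; rewrite -[n.+1]/(1 + n)%N => A hA hpd.
pose a := ulsubmx A; pose b := ursubmx A; pose c := dlsubmx A; pose C := drsubmx A.
have hAb : A = block_mx a b c C by rewrite submxK.
have hC : C^T = C by rewrite /C trmx_drsub hA.
have hc : c = b^T by rewrite /c /b trmx_ursub hA.
have hCpd : forall v, v != 0 -> 0 < qf C v.
  move=> v hv; have := hpd (row_mx 0 v); rewrite row_mx_eq0 eqxx hv => /(_ isT).
  by rewrite /qf hAb tr_row_mx mul_row_block mul_row_col trmx0 !mul0mx !add0r mulmx0 add0r.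
have [dC0 dCle] := IH C hC hCpd.
have hCu : C \in unitmx by rewrite unitmxE unitfE gt_eqF.
pose Ci := invmx C.
have hCi : Ci^T = Ci by rewrite /Ci trmx_inv hC.
pose s := a - b *m Ci *m c.
have hdet : \det A = s 0 0 * \det C.
  have -> : A = block_mx 1%:M (b *m Ci) 0 1%:M *m block_mx s 0 c C.
    rewrite mulmx_block !mul1mx !mul0mx !add0r mulmxKV // /s subrK.
    exact: hAb.
  by rewrite det_mulmx det_ublock !det_scalar !expr1n !mul1r det_lblock det_mx11.
have s0 : 0 < s 0 0.
  have := hpd (row_mx 1%:M (- (b *m Ci))).
  rewrite row_mx_eq0 negb_and -[1%:M == 0]/(1%:M == 0 :> 'M[R]_1).
  have -> : (1%:M == 0 :> 'M[R]_1) = false.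
    by apply/negbTE/negP => /eqP/matrixP/(_ 0 0); rewrite !mxE eqxx; apply/eqP; exact: oner_neq0.
  move=> /(_ isT); rewrite /qf hAb mul_row_block !mul1mx !mulNmx mulmxKV // subrr.
  rewrite tr_row_mx mul_row_col mul0mx addr0 trmx1 mulmx1.
  by [].
have sle : s 0 0 <= a 0 0.
  have : 0 <= qf C (b *m Ci).
    have [->|hb] := eqVneq (b *m Ci) 0; first by rewrite qf0.
    exact: ltW (hCpd _ hb).
  rewrite /qf trmx_mul hCi mulmxKV // mulmxA.
  by rewrite /s hc !mxE; lra.
split; first by rewrite hdet mulr_gt0.
rewrite hdet big_ord_recl.
have -> : A ord0 ord0 = a 0 0.
  by rewrite /a !mxE (_ : lshift n 0 = ord0) //; apply: val_inj.
rewrite (eq_bigr (fun i : 'I_n => C i i)); last first.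
  move=> i _; rewrite /C !mxE (_ : rshift 1 i = lift ord0 i) //; exact: val_inj.
apply: ler_pM => //; first exact: ltW.
exact: ltW.
Qed.

Lemma qf_delta (R : realType) n (A : 'M[R]_n) i : qf A (delta_mx 0 i) = A i i.
Proof. by rewrite /qf -rowE trmx_delta -colE !mxE. Qed.

Theorem proposition2 (R : realType) (d : nat) (hd : (0 < d)%N)
    (L : 'M[R]_d) (hL : spd L)
    (S : 'M[R]_d) (hS : is_sqrtm L S)
    (l : R) (hl : is_lambda_max (S *m mdiag (invmx L) *m S) l) :
  l * (\det L) `^ (d%:R^-1) >= (\det (mdiag L)) `^ (d%:R^-1).
Proof.
case: hL => hLt hLpd; case: hS => [[hSt _] hSS]; case: hl => _ hl.
have [dL0 _] := hadamard hLt hLpd.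
have hLu : L \in unitmx by rewrite unitmxE unitfE gt_eqF.
pose Li := invmx L.
have hLit : Li^T = Li by rewrite /Li trmx_inv hLt.
have hLipd : forall v, v != 0 -> 0 < qf Li v.
  move=> v hv.
  have hw : v *m Li != 0.
    apply: contra hv => /eqP h; apply/eqP.
    by rewrite -(mulmxKV hLu v) -/Li h mul0mx.
  have := hLpd _ hw; congr (0 < _).
  by rewrite trmx_mul hLit /qf -!mulmxA mulKVmx.
have [_ dLi] := hadamard hLit hLipd.
rewrite /Li det_inv in dLi.
have dne : forall i : 'I_d, delta_mx 0 i != 0 :> 'rV[R]_d.
  by move=> i; apply/eqP => /matrixP/(_ 0 i); rewrite !mxE !eqxx /= => /eqP; rewrite oner_eq0.
have Lii : forall i, 0 < L i i by move=> i; rewrite -qf_delta; apply: hLpd.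
have Liii : forall i, 0 < Li i i by move=> i; rewrite -qf_delta; apply: hLipd.
pose M := S *m mdiag Li *m S.
have hMt : M^T = M by rewrite /M !trmx_mul hSt /mdiag tr_diag_mx mulmxA.
have key : forall i, L i i * Li i i <= l.
  move=> i; have := rayleigh hMt hl (delta_mx 0 i *m S).
  have -> : nrm (delta_mx 0 i *m S) = L i i.
    by rewrite -qf_delta /nrm /qf trmx_mul hSt -hSS !mulmxA.
  have -> : qf M (delta_mx 0 i *m S) = (L *m mdiag Li *m L) i i.
    by rewrite -qf_delta /qf /M trmx_mul hSt -hSS !mulmxA.
  have hLs : forall i j, L j i = L i j by move=> i0 j0; rewrite -[in RHS]hLt mxE.
  rewrite /mdiag mul_mx_diag mxE (bigD1 i) //= !mxE => h.
  have hr : 0 <= \sum_(j < d | j != i) (\matrix_(i0, j0) (L i0 j0 * (\row_i1 Li i1 i1) 0 j0)) i j * L j i.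
    apply: sumr_ge0 => j _; rewrite !mxE hLs mulrAC -expr2.
    by rewrite mulr_ge0 ?sqr_ge0 // ltW.
  have h2 : L i i * (L i i * Li i i) <= L i i * l by rewrite (mulrC _ l); lra.
  by rewrite ler_pM2l in h2.
have l0 : 0 <= l.
  apply: le_trans (key (Ordinal hd)); rewrite ltW // mulr_gt0 //.
have hprod : \prod_i L i i <= l ^+ d * \det L.
  have h1 : \prod_i (L i i * Li i i) <= \prod_(i < d) l.
    by apply: ler_prod => i _; rewrite key andbT ltW // mulr_gt0.
  rewrite prodr_const card_ord big_split /= in h1.
  have hp : 0 < \prod_i L i i by apply: prodr_gt0 => i _.
  have h3 : \prod_i L i i * (\det L)^-1 <= l ^+ d.
    apply: le_trans h1; rewrite ler_pM2l //.
  by rewrite -ler_pdivrMr.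
have hdm : \det (mdiag L) = \prod_i L i i.
  by rewrite /mdiag det_diag; apply: eq_bigr => i _; rewrite mxE.
rewrite hdm.
have -> : l = (l ^+ d) `^ (d%:R^-1).
  rewrite -powR_mulrn // -powRrM mulfV ?powRr1 //.
  by rewrite pnatr_eq0 -lt0n.
rewrite -(powRM _ (exprn_ge0 d l0) (ltW dL0)).
apply: ge0_ler_powR => //.
- by rewrite nnegrE; apply/ltW/prodr_gt0 => i _; exact: Lii.
- by rewrite nnegrE mulr_ge0 // ?exprn_ge0 // ltW.
Qed.
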